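(* Let $\ell\ge2$, $C\subseteq\mathbb{F}_q^n$ a linear code and $(A,B)$ an $\ell$-power $t$-error locating pair for $C$. Let $\mathbf{y}=\mathbf{c}+\mathbf{e}$ with $\mathbf{c}\in C$, $\mathrm{w}(\mathbf{e})=t$, $I_{\mathbf{e}}=\mathrm{supp}(\mathbf{e})$, and for $i=1,\dots,\ell$ let $\mathbf{e}^{(i)}=\sum_{h=1}^{i}\binom{i}{h}\mathbf{c}^{i-h}*\mathbf{e}^{h}$ (so that $\mathbf{y}^i=\mathbf{c}^i+\mathbf{e}^{(i)}$). Let $M_1=\{\mathbf{a}\in A\mid \langle \mathbf{a}*\mathbf{y},\mathbf{b}\rangle=0\ \forall \mathbf{b}\in B\}$, $M_i=\{\mathbf{a}\in A\mid \langle \mathbf{a}*\mathbf{y}^i,\mathbf{v}\rangle=0\ \forall \mathbf{v}\in (B^{\perp}*C^{i-1})^{\perp}\}$ for $2\le i\le\ell$, and $M=\bigcap_{i=1}^\ell M_i$. Then $$M_{I_{\mathbf{e}}}=\big((\mathbf{e}^{(1)}*B)_{I_{\mathbf{e}}}\big)^{\perp}\cap\bigcap_{i=2}^{\ell}\big((\mathbf{e}^{(i)}*(B^\perp*C^{i-1})^\perp)_{I_{\mathbf{e}}}\big)^{\perp},$$ with duals taken in $\mathbb{F}_q^{|I_{\mathbf{e}}|}$.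
   Context: All codes are $\mathbb{F}_q$-linear subspaces of $\mathbb{F}_q^n$. $\mathbf{u}*\mathbf{v}=(u_1v_1,\dots,u_nv_n)$, $\mathbf{u}^i=(u_1^i,\dots,u_n^i)$ with $\mathbf{u}^0=(1,\dots,1)$; $A*B$ is the span of all $\mathbf{a}*\mathbf{b}$; $C^1=C$, $C^i=C*C^{i-1}$; $\mathbf{u}*X=\{\mathbf{u}*\mathbf{x}:\mathbf{x}\in X\}$. $\langle\mathbf{u},\mathbf{v}\rangle=\sum_iu_iv_i$, $X^\perp$ the dual. $\mathrm{w}$ Hamming weight, $\mathrm{d}$ minimum distance, $\mathrm{supp}(\mathbf{x})=\{i:x_i\ne0\}$. For $J=\{j_1<\dots<j_s\}$, $X_J=\{(x_{j_1},\dots,x_{j_s}):\mathbf{x}\in X\}$. A pair $(A,B)$ is an $\ell$-power $t$-error locating pair for $C$ if: (1) $A*B\subseteq C^\perp$; (2) $\dim A>t$; (3) $\mathrm{d}(A^\perp)>t$; (4) $\mathrm{d}(A)+\mathrm{d}(C)>n$; (5) $\dim B+\sum_{i=2}^{\ell}\dim (B^\perp*C^{i-1})^\perp\ge t$. *)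

(* Defs.v *)
(* codes over a finite field F (= F_q) as subspaces of 'rV[F]_n. *)
From HB Require Import structures.
From mathcomp Require Import all_boot all_order all_algebra all_field.
Set Implicit Arguments. Unset Strict Implicit. Unset Printing Implicit Defensive.
Import Order.TTheory GRing.Theory Num.Theory.
Local Open Scope ring_scope.

Section Codes.
Variable F : finFieldType.

Definition elems m (X : {vspace 'rV[F]_m}) : seq 'rV[F]_m :=
  [seq x <- enum 'rV[F]_m | x \in X].

Definition starv n (u v : 'rV[F]_n) : 'rV[F]_n := \row_j (u 0 j * v 0 j).

Definition powv n (u : 'rV[F]_n) (i : nat) : 'rV[F]_n := \row_j (u 0 j ^+ i).

Definition dotv n (u v : 'rV[F]_n) : F := \sum_(j < n) u 0 j * v 0 j.

Definition starc n (A B : {vspace 'rV[F]_n}) : {vspace 'rV[F]_n} :=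
  <<[seq starv ab.1 ab.2 | ab <- [seq (a, b) | a <- elems A, b <- elems B]]>>%VS.

Definition starvc n (u : 'rV[F]_n) (X : {vspace 'rV[F]_n}) : {vspace 'rV[F]_n} :=
  <<[seq starv u x | x <- elems X]>>%VS.

(* C^1 = C, C^i = C * C^(i-1); C^0 is the span of (1,...,1) (never used) *)
Fixpoint codepow n (C : {vspace 'rV[F]_n}) (i : nat) : {vspace 'rV[F]_n} :=
  match i with
  | 0 => <[powv 0 0]>%VS
  | 1 => C
  | i'.+1 => starc C (codepow C i')
  end.

Definition dualc m (X : {vspace 'rV[F]_m}) : {vspace 'rV[F]_m} :=
  <<[seq x <- enum 'rV[F]_m | [forall v : 'rV[F]_m, (v \in X) ==> (dotv x v == 0%R)]]>>%VS.

Definition supp n (x : 'rV[F]_n) : {set 'I_n} := [set i | x 0 i != 0].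
Definition wt n (x : 'rV[F]_n) : nat := #|supp x|.

(* minimum distance; by convention n+1 (i.e. "infinity") for the zero code *)
Definition mindist n (X : {vspace 'rV[F]_n}) : nat :=
  \big[minn/n.+1]_(x : 'rV[F]_n | (x \in X) && (x != 0)) wt x.

(* puncturing / restriction to J = {j_1 < ... < j_s} *)
Definition restrv n (J : {set 'I_n}) (x : 'rV[F]_n) : 'rV[F]_#|J| :=
  \row_(k < #|J|) x 0 (enum_val k).
Definition restrc n (J : {set 'I_n}) (X : {vspace 'rV[F]_n}) : {vspace 'rV[F]_#|J|} :=
  <<[seq restrv J x | x <- elems X]>>%VS.

Definition Bi n (B C : {vspace 'rV[F]_n}) (i : nat) : {vspace 'rV[F]_n} :=
  dualc (starc (dualc B) (codepow C i.-1)).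

Definition locating_pair n (l t : nat) (C A B : {vspace 'rV[F]_n}) : Prop :=
  [/\ (starc A B <= dualc C)%VS,
      t < \dim A,
      t < mindist (dualc A),
      n < mindist A + mindist C
    & t <= \dim B + \sum_(2 <= i < l.+1) \dim (Bi B C i)]%N.

Definition err_i n (c e : 'rV[F]_n) (i : nat) : 'rV[F]_n :=
  \sum_(1 <= h < i.+1) starv (powv c (i - h)) (powv e h) *+ 'C(i, h).

Definition Mset n (A B C : {vspace 'rV[F]_n}) (y : 'rV[F]_n) (i : nat) : {vspace 'rV[F]_n} :=
  if i == 1%N then
    <<[seq a <- elems A | [forall b : 'rV[F]_n, (b \in B) ==> (dotv (starv a y) b == 0%R)]]>>%VS
  else
    <<[seq a <- elems A | [forall v : 'rV[F]_n,
          (v \in Bi B C i) ==> (dotv (starv a (powv y i)) v == 0%R)]]>>%VS.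

Definition Mcap n (l : nat) (A B C : {vspace 'rV[F]_n}) (y : 'rV[F]_n) : {vspace 'rV[F]_n} :=
  (\bigcap_(1 <= i < l.+1) Mset A B C y i)%VS.

End Codes.

(* Main.v *)
Require Import Defs.
From mathcomp Require Import all_boot all_order all_algebra all_field.
From mathcomp Require Import zify.
Set Implicit Arguments. Unset Strict Implicit. Unset Printing Implicit Defensive.
Import GRing.Theory.
Local Open Scope ring_scope.

Lemma span_ind (K : fieldType) (vT : vectType K) (P : vT -> Prop) (s : seq vT) :
  P 0 -> (forall k x y, P x -> P y -> P (k *: x + y)) ->
  (forall x, x \in s -> P x) -> forall r, r \in <<s>>%VS -> P r.
Proof.
move=> P0 Pl; elim: s => [|x s IH] Hs r.
  by rewrite span_nil memv0 => /eqP->.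
rewrite span_cons => /memv_addP [u /vlineP [k ->] [v Hv ->]].
apply: Pl; first exact: Hs (mem_head _ _).
by apply: IH => // z zs; apply: Hs; rewrite in_cons zs orbT.
Qed.

Lemma bigmin_le (T : finType) (P : pred T) (f : T -> nat) N x :
  P x -> (\big[minn/N]_(y | P y) f y <= f x)%N.
Proof.
move=> Px; rewrite unlock.
have : x \in index_enum T by rewrite mem_index_enum.
elim: (index_enum T) => [|y r IH] //=.
rewrite in_cons => /orP [/eqP <-|xr]; first by rewrite Px geq_minl.
case: (P y) => //=; [exact: leq_trans (geq_minr _ _) (IH xr) | exact: IH].
Qed.

Lemma memv_bigcap_seq (K : fieldType) (vT : vectType K) (I : eqType) (r : seq I)
  (U : I -> {vspace vT}) x :
  x \in (\big[@capv _ _/fullv]_(i <- r) U i)%VS <-> forall i, i \in r -> x \in U i.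
Proof.
elim: r => [|i r IH]; first by rewrite big_nil memvf.
rewrite big_cons memv_cap; split.
  case/andP=> xi /IH H j; rewrite in_cons => /orP [/eqP -> //|jr]; exact: H.
by move=> H; rewrite H ?mem_head //=; apply/IH => j jr; apply: H; rewrite in_cons jr orbT.
Qed.

Section S.
Variable F : finFieldType.

Lemma mem_elems m (X : {vspace 'rV[F]_m}) x : (x \in elems X) = (x \in X).
Proof. by rewrite mem_filter mem_enum andbT. Qed.

Lemma dotvDZl m k (x y v : 'rV[F]_m) : dotv (k *: x + y) v = k * dotv x v + dotv y v.
Proof. by rewrite /dotv mulr_sumr -big_split; apply: eq_bigr => j _; rewrite !mxE mulrDl mulrA. Qed.
Lemma dotvDZr m k (x y v : 'rV[F]_m) : dotv v (k *: x + y) = k * dotv v x + dotv v y.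
Proof. by rewrite /dotv mulr_sumr -big_split; apply: eq_bigr => j _; rewrite !mxE mulrDr mulrCA. Qed.
Lemma dotvC m (x y : 'rV[F]_m) : dotv x y = dotv y x.
Proof. by apply: eq_bigr => j _; rewrite mulrC. Qed.
Lemma dotv0l m (v : 'rV[F]_m) : dotv 0 v = 0.
Proof. by rewrite /dotv big1 // => j _; rewrite mxE mul0r. Qed.
Lemma dotv0r m (v : 'rV[F]_m) : dotv v 0 = 0.
Proof. by rewrite dotvC dotv0l. Qed.
Lemma dotv_starv m (a u v : 'rV[F]_m) : dotv (starv a u) v = dotv a (starv u v).
Proof. by apply: eq_bigr => j _; rewrite !mxE mulrA. Qed.
Lemma restrvDZ n (J : {set 'I_n}) k (x y : 'rV[F]_n) :
  restrv J (k *: x + y) = k *: restrv J x + restrv J y.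
Proof. by apply/rowP => i; rewrite !mxE. Qed.
Lemma restrv0 n (J : {set 'I_n}) : restrv J (0 : 'rV[F]_n) = 0.
Proof. by apply/rowP => i; rewrite !mxE. Qed.

Lemma mem_span_pred m (P : pred 'rV[F]_m) : P 0 ->
  (forall k x y, P x -> P y -> P (k *: x + y)) ->
  forall x, (x \in <<[seq x <- enum 'rV[F]_m | P x]>>%VS) = P x.
Proof.
move=> P0 Pl x; apply/idP/idP.
  by apply: (@span_ind _ _ (fun r => is_true (P r))) => // z; rewrite mem_filter => /andP[].
by move=> Px; apply: memv_span; rewrite mem_filter Px mem_enum.
Qed.

Lemma mem_dualc m (X : {vspace 'rV[F]_m}) x :
  x \in dualc X <-> forall u, u \in X -> dotv x u = 0.
Proof.
rewrite /dualc mem_span_pred.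
- split; first by move/forallP => H u uX; apply/eqP; exact: implyP (H u) uX.
  by move=> H; apply/forallP => u; apply/implyP => uX; rewrite H.
- by apply/forallP => u; rewrite dotv0l eqxx implybT.
move=> k x1 y1 /forallP H1 /forallP H2; apply/forallP => u; apply/implyP => uX.
by rewrite dotvDZl (eqP (implyP (H1 u) uX)) (eqP (implyP (H2 u) uX)) mulr0 addr0.
Qed.

Lemma mem_span_filter m (X : {vspace 'rV[F]_m}) (Q : pred 'rV[F]_m) : Q 0 ->
  (forall k x y, Q x -> Q y -> Q (k *: x + y)) ->
  forall x, (x \in <<[seq a <- elems X | Q a]>>%VS) = (x \in X) && Q x.
Proof.
move=> Q0 Ql x; apply/idP/idP.
  apply: (@span_ind _ _ (fun r => is_true ((r \in X) && Q r))) => //; first by rewrite mem0v Q0.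
    move=> k a b /andP[aX Qa] /andP[bX Qb]; rewrite Ql // andbT.
    by rewrite memvD // memvZ.
  by move=> z; rewrite mem_filter mem_elems => /andP[-> ->].
by case/andP => xX Qx; apply: memv_span; rewrite mem_filter Qx mem_elems.
Qed.

Lemma restrv_in n (J : {set 'I_n}) (X : {vspace 'rV[F]_n}) x :
  x \in X -> restrv J x \in restrc J X.
Proof. by move=> xX; apply: memv_span; apply: map_f; rewrite mem_elems. Qed.

Lemma mem_restrc n (J : {set 'I_n}) (X : {vspace 'rV[F]_n}) z :
  z \in restrc J X -> exists2 x, x \in X & z = restrv J x.
Proof.
apply: (@span_ind _ _ (fun z => exists2 x, x \in X & z = restrv J x)).
- by exists 0; [rewrite mem0v | rewrite restrv0].
- move=> k _ _ [x xX ->] [y yX ->]; exists (k *: x + y); last by rewrite restrvDZ.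
  by rewrite memvD // memvZ.
- by move=> z' /mapP [x xX ->]; exists x => //; rewrite -mem_elems.
Qed.

Lemma starv_in_starc n (A B : {vspace 'rV[F]_n}) a b :
  a \in A -> b \in B -> starv a b \in starc A B.
Proof.
move=> aA bB; apply: memv_span; apply/mapP; exists (a, b) => //.
by apply/allpairsP; exists (a, b); rewrite !mem_elems.
Qed.

Lemma mem_dual_restr n (J : {set 'I_n}) (u : 'rV[F]_n) (X : {vspace 'rV[F]_n}) z :
  z \in dualc (restrc J (starvc u X)) <->
  forall x, x \in X -> dotv z (restrv J (starv u x)) = 0.
Proof.
split.
  move/mem_dualc=> H x xX; apply: H; apply: restrv_in; apply: memv_span; apply: map_f.
  by rewrite mem_elems.
move=> H; apply/mem_dualc => w /mem_restrc [x' x'S ->]; move: x' x'S; apply: (@span_ind _ _ (fun x' => dotv z (restrv J x') = 0)).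
- by rewrite restrv0 dotv0r.
- by move=> k x y Hx Hy; rewrite restrvDZ dotvDZr Hx Hy mulr0 addr0.
- by move=> x /mapP [x0 x0X ->]; apply: H; rewrite -mem_elems.
Qed.

Lemma dotv_restr n (J : {set 'I_n}) (x v : 'rV[F]_n) :
  (forall j, j \notin J -> x 0 j = 0) ->
  dotv x v = dotv (restrv J x) (restrv J v).
Proof.
move=> Hx; rewrite /dotv (bigID (mem J)) /= [X in _ + X]big1 ?addr0.
  by rewrite big_enum_val; apply: eq_bigr => k _; rewrite !mxE.
by move=> j /Hx ->; rewrite mul0r.
Qed.


Lemma err_iE n (c e : 'rV[F]_n) i j :
  err_i c e i 0 j = \sum_(1 <= h < i.+1) (c 0 j ^+ (i - h) * e 0 j ^+ h) *+ 'C(i, h).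
Proof. by rewrite /err_i summxE; apply: eq_bigr => h _; rewrite mulmxnE !mxE. Qed.

Lemma err_i_supp n (c e : 'rV[F]_n) i j : j \notin supp e -> err_i c e i 0 j = 0.
Proof.
rewrite inE negbK => /eqP ej; rewrite err_iE big_nat big1 // => h /andP [h1 _].
by rewrite ej expr0n eqn0Ngt h1 /= mulr0 mul0rn.
Qed.

Lemma powvD n (c e : 'rV[F]_n) i : powv (c + e) i = powv c i + err_i c e i.
Proof.
apply/rowP => j; rewrite !mxE err_iE exprDn big_ord_recl /= subn0 expr0 mulr1 bin0 mulr1n.
congr (_ + _); rewrite big_add1 /= big_mkord; apply: eq_bigr => h _.
by rewrite /bump /= add1n.
Qed.

Lemma powv1 n (c : 'rV[F]_n) : powv c 1 = c.
Proof. by apply/rowP => j; rewrite !mxE expr1. Qed.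

Lemma powv_codepow n (C : {vspace 'rV[F]_n}) c k :
  c \in C -> (0 < k)%N -> powv c k \in codepow C k.
Proof.
move=> cC; elim: k => [//|[|k] IH _]; first by rewrite powv1.
have -> : powv c k.+2 = starv c (powv c k.+1) by apply/rowP => j; rewrite !mxE exprS.
by apply: starv_in_starc => //; apply: IH.
Qed.

Lemma starv_powS n (a c : 'rV[F]_n) k :
  starv a (powv c k.+1) = starv (starv a c) (powv c k).
Proof. by apply/rowP => j; rewrite !mxE exprS mulrA. Qed.

Lemma FR n (J : {set 'I_n}) (A : {vspace 'rV[F]_n}) :
  (#|J| < mindist (dualc A))%N -> forall z : 'rV[F]_#|J|, exists2 a, a \in A & restrv J a = z.
Proof.
move=> HJ z.
set s := elems A.
pose G := \matrix_(i < size s, j < #|J|) restrv J s`_i 0 j.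
have rowG i : row i G = restrv J s`_i by apply/rowP => j; rewrite !mxE.
have fullG : row_full G.
  rewrite /row_full eqn_leq rank_leq_col /= leqNgt; apply/negP => Hlt.
  pose K := kermx G^T.
  have K0 : K != 0.
    by rewrite -mxrank_eq0 mxrank_ker mxrank_tr -lt0n subn_gt0.
  have [i Ki] : exists i, row i K != 0.
    apply/existsP; move: K0; apply: contraR; rewrite negb_exists => /forallP H.
    by apply/eqP/row_matrixP => i; rewrite row0; apply/eqP; move: (H i); rewrite negbK.
  set w := row i K in Ki.
  have wG : w *m G^T = 0 by rewrite /w -row_mul mulmx_ker row0.
  have Jn0 : (0 < #|J|)%N by exact: leq_ltn_trans (leq0n _) Hlt.
  have /card_gt0P [j0 j0J] := Jn0.
  pose x := \row_(j < n) (if j \in J then w 0 (enum_rank_in j0J j) else 0).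
  have xw : restrv J x = w.
    by apply/rowP => k; rewrite !mxE (enum_valP k) enum_valK_in.
  have xs : forall j, j \notin J -> x 0 j = 0 by move=> j /negbTE jJ; rewrite mxE jJ.
  have xd : x \in dualc A.
    apply/mem_dualc => a aA; rewrite (dotv_restr _ xs) xw.
    have as' : a \in s by rewrite mem_elems.
    have rs := as'; rewrite -index_mem in rs.
    have := congr1 (fun M : 'rV_(size s) => M 0 (Ordinal rs)) wG.
    rewrite /= !mxE => <-; apply: eq_bigr => j _; rewrite !mxE nth_index //.
  have x0 : x != 0.
    by apply: contraNneq Ki => x0; rewrite -xw x0 restrv0.
  have := bigmin_le (fun y => wt y) n.+1 (P := fun y => (y \in dualc A) && (y != 0)) (x := x).
  rewrite xd x0 => /(_ isT) Hm.
  have Hw : (wt x <= #|J|)%N.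
    apply: subset_leq_card; apply/subsetP => j; rewrite inE; apply: contraR => /xs ->.
    by rewrite eqxx.
  have := leq_trans HJ (leq_trans Hm Hw); by rewrite ltnn.
have /submxP [D zD] := submx_full z fullG.
exists (\sum_i D 0 i *: s`_i).
  by apply: memv_suml => i _; apply: memvZ; rewrite -mem_elems; apply: mem_nth.
apply/rowP => k; rewrite zD mulmx_sum_row mxE !summxE; apply: eq_bigr => i _.
by rewrite rowG !mxE.
Qed.

Lemma mem_Mspan m (X V : {vspace 'rV[F]_m}) u a :
  a \in <<[seq a <- elems X | [forall v, (v \in V) ==> (dotv (starv a u) v == 0%R)]]>>%VS <->
  a \in X /\ forall v, v \in V -> dotv (starv a u) v = 0.
Proof.
rewrite mem_span_filter.
- split; first by case/andP => aX /forallP H; split => // v vV; apply/eqP; exact: implyP (H v) vV.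
  by case=> aX H; rewrite aX /=; apply/forallP => v; apply/implyP => vV; rewrite H.
- by apply/forallP => v; rewrite dotv_starv dotv0l eqxx implybT.
move=> k x1 y1 /forallP H1 /forallP H2; apply/forallP => v; apply/implyP => vV.
rewrite dotv_starv dotvDZl -!dotv_starv.
by rewrite (eqP (implyP (H1 v) vV)) (eqP (implyP (H2 v) vV)) mulr0 addr0.
Qed.

Lemma KEY n (a c e v : 'rV[F]_n) i :
  dotv (starv a (powv (c + e) i)) v =
  dotv (starv a (powv c i)) v + dotv (restrv (supp e) a) (restrv (supp e) (starv (err_i c e i) v)).
Proof.
rewrite powvD.
have -> : dotv (starv a (powv c i + err_i c e i)) v =
   dotv (starv a (powv c i)) v + dotv (starv a (err_i c e i)) v.
  by rewrite /dotv -big_split; apply: eq_bigr => j _; rewrite !mxE mulrDr mulrDl.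
congr (_ + _); rewrite dotv_starv dotvC (dotv_restr (J := supp e)); first exact: dotvC.
by move=> j /err_i_supp ej; rewrite mxE ej mul0r.
Qed.

Lemma swap_starv n (a b c : 'rV[F]_n) : dotv (starv a c) b = dotv (starv a b) c.
Proof. by apply: eq_bigr => j _; rewrite !mxE mulrAC. Qed.

End S.

Unset Implicit Arguments.
Theorem mainTheorem8 (F : finFieldType) (n l t : nat)
  (C A B : {vspace 'rV[F]_n}) (c e : 'rV[F]_n) :
  (2 <= l)%N ->
  locating_pair l t C A B ->
  c \in C ->
  wt e = t ->
  let y := c + e in
  let Ie := supp e in
  restrc Ie (Mcap l A B C y) =
  (dualc (restrc Ie (starvc (err_i c e 1) B)) :&:
   \bigcap_(2 <= i < l.+1) dualc (restrc Ie (starvc (err_i c e i) (Bi B C i))))%VS.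
Proof.
move=> l2 [HAB HtA HtdA HnAC HtB] cC wte y Ie.
have Ht : (#|Ie| < mindist (dualc A))%N by rewrite /Ie -/(wt e) wte.
have acB : forall a, a \in A -> starv a c \in dualc B.
  move=> a aA; apply/mem_dualc => b bB; rewrite swap_starv.
  have /mem_dualc H : starv a b \in dualc C by apply: (subvP HAB); apply: starv_in_starc.
  exact: H.
have orth1 : forall a, a \in A -> forall b, b \in B -> dotv (starv a (powv c 1)) b = 0.
  by move=> a aA b bB; rewrite powv1; move/mem_dualc: (acB a aA) => ->.
have orthi : forall a, a \in A -> forall i, (2 <= i)%N -> forall v, v \in Bi B C i ->
    dotv (starv a (powv c i)) v = 0.
  move=> a aA [|[|k]] // _ v /mem_dualc vB; rewrite dotvC; apply: vB.
  by rewrite starv_powS; apply: starv_in_starc; [apply: acB | apply: powv_codepow].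
have M1 : forall a, a \in Mset A B C y 1 <-> a \in A /\ forall b, b \in B -> dotv (starv a y) b = 0.
  by move=> a; rewrite /Mset eqxx; apply: mem_Mspan.
have Mi : forall a i, (2 <= i)%N -> (a \in Mset A B C y i <-> a \in A /\
     forall v, v \in Bi B C i -> dotv (starv a (powv y i)) v = 0).
  by move=> a [|[|k]] // _; rewrite /Mset /=; apply: mem_Mspan.
have E1 : err_i c e 1 = e.
  by apply/rowP => j; rewrite err_iE big_nat1 subnn expr0 mul1r expr1 bin1.
apply/vspaceP => z; apply/idP/idP.
  case/mem_restrc => a /memv_bigcap_seq aM ->.
  have /M1 [aA a1] : a \in Mset A B C y 1 by apply: aM; rewrite mem_index_iota; lia.
  rewrite memv_cap; apply/andP; split.
    apply/mem_dual_restr => b bB.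
    by have := a1 b bB; rewrite -{1}(powv1 y) KEY orth1 // add0r.
  apply/memv_bigcap_seq => i; rewrite mem_index_iota => /andP [i2 il].
  apply/mem_dual_restr => v vB.
  have /(Mi a i i2) [_ ai] : a \in Mset A B C y i by apply: aM; rewrite mem_index_iota; lia.
  by have := ai v vB; rewrite KEY orthi // add0r.
rewrite memv_cap => /andP [/mem_dual_restr z1 /memv_bigcap_seq z2].
have [a aA az] := FR Ht z.
rewrite -az; apply: restrv_in; apply/memv_bigcap_seq => i; rewrite mem_index_iota => /andP [i1 il].
case: (ltngtP i 1) i1 => [//| i2 _ | -> _].
  apply/(Mi a i i2); split => // v vB.
  have iin : i \in index_iota 2 l.+1 by rewrite mem_index_iota; lia.
  have /mem_dual_restr /(_ v vB) := z2 i iin.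
  by rewrite -az KEY orthi // add0r.
apply/M1; split => // b bB.
by rewrite -(powv1 y) KEY orth1 // add0r; move: (z1 b bB); rewrite -az.
Qed.
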